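(* Let $K\lhd\Gamma$ be finitely presented groups with $\Gamma/K\cong\mathbb{Z}$. Let $\mathcal{A}$ be a finite generating set for $K$, let $t\in\Gamma$ be an element whose image generates $\Gamma/K$, and let $\theta$ be the automorphism $x\mapsto txt^{-1}$ of $K$. Let $\mathcal{P}_K=\langle\mathcal{A}\mid\mathcal{R}\rangle$ be a presentation of $K$, and for each $a\in\mathcal{A}$ let $w_a$ be a word over $\mathcal{A}^{\pm1}$ representing $\theta(a)$. Let $\mathcal{S}=\{tat^{-1}w_a^{-1}: a\in\mathcal{A}\}$ and $\mathcal{P}_\Gamma=\langle\mathcal{A},t\mid\mathcal{R},\mathcal{S}\rangle$ (a presentation of $\Gamma$). For each $k\in\mathbb{Z}$ let $\Phi_k$ be an endomorphism of the free monoid on $\mathcal{A}^{\pm1}$ which lifts $\theta^k$ and commutes with formal inversion of words, with $\Phi_0$ the identity. Let $\overline{\mathcal{R}}=\{\Phi_k(r): r\in\mathcal{R}, k\in\mathbb{Z}\}$, $\overline{\mathcal{S}}=\{\Phi_{k+1}(a)\Phi_k(w_a)^{-1}: a\in\mathcal{A}, k\in\mathbb{Z}\}$, and $\mathcal{P}_K^\infty=\langle\mathcal{A}\mid\overline{\mathcal{R}},\overline{\mathcal{S}}\rangle$ (a presentation of $K$), with index $\|\omega\|$ on $\overline{\mathcal{R}}\cup\overline{\mathcal{S}}$ defined as the minimal $|k|$ such that either $\omega\equiv\Phi_k(r)$ for some $r\in\mathcal{R}$ or $\omega\equiv\Phi_{k+1}(a)\Phi_k(w_a)^{-1}$ for some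 $a\in\mathcal{A}$. If $(\alpha,\rho)$ is an area-radius pair for $\mathcal{P}_\Gamma$, then $(\alpha,\rho)$ is an area-penetration pair for $(\mathcal{P}_K^\infty,\|\cdot\|)$.
   Context: $\equiv$ denotes equality of words (letter by letter). For a presentation $\mathcal{P}=\langle\mathcal{B}\mid\mathcal{T}\rangle$ with $\mathcal{B}$ finite and a word $w$ over $\mathcal{B}^{\pm1}$ representing the identity, a null-$\mathcal{P}$-expression is a sequence $(x_i,r_i)_{i=1}^m$ with $x_i$ words and $r_i\in\mathcal{T}^{\pm1}$ such that $w$ is freely equal to $\prod_{i=1}^m x_ir_ix_i^{-1}$; its area is $m$ and radius $\max_i|x_i|$. $(\alpha,\rho)$ is an area-radius pair for $\mathcal{P}$ if every null-homotopic word of length $\le n$ has a null-$\mathcal{P}$-expression with area $\le\alpha(n)$ and radius $\le\rho(n)$. Given an index $\|\cdot\|:\mathcal{T}\to\mathbb{N}$ (extended by $\|r^{-1}\|=\|r\|$), $(\alpha,\pi)$ is an area-penetration pair for $(\mathcal{P},\|\cdot\|)$ if every null-homotopic word of length $\le n$ has a null-$\mathcal{P}$-expression $(x_i,r_i)_{i=1}^m$ with $m\le\alpha(n)$ and $\|r_i\|\le\pi(n)$ for all $i$. *)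

(* Defs.v *)
(* Abstract (possibly infinite) groups are given as an
   explicit record; words over a generating alphabet X are seq (X * bool),
   where (x, true) is the letter x and (x, false) is x^-1. *)
From Stdlib Require Import Relation_Operators List.
From mathcomp Require Import all_boot all_algebra.
Set Implicit Arguments. Unset Strict Implicit. Unset Printing Implicit Defensive.

Record group := Group {
  gcar :> Type;
  gmul : gcar -> gcar -> gcar;
  ginv : gcar -> gcar;
  gone : gcar;
  gmulA : forall x y z, gmul x (gmul y z) = gmul (gmul x y) z;
  gmul1 : forall x, gmul gone x = x;
  gmulV : forall x, gmul (ginv x) x = gone }.

Fixpoint gexpn (G : group) (g : G) (n : nat) : G :=
  match n with 0 => gone G | n'.+1 => gmul g (gexpn g n') end.

Definition gexpz (G : group) (g : G) (z : int) : G :=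
  match z with Posz n => gexpn g n | Negz n => ginv (gexpn g n.+1) end.

Definition word (X : Type) := seq (X * bool).

Definition winv (X : Type) (w : word X) : word X :=
  rev (map (fun p => (p.1, ~~ p.2)) w).

Definition eval (X : Type) (G : group) (f : X -> G) (w : word X) : G :=
  foldr (fun p acc => gmul (if p.2 then f p.1 else ginv (f p.1)) acc) (gone G) w.

Definition fred1 (X : Type) (u v : word X) : Prop :=
  exists (p q : word X) (x : X * bool), u = p ++ x :: (x.1, ~~ x.2) :: q /\ v = p ++ q.

Definition freely_equal (X : Type) (u v : word X) : Prop :=
  clos_refl_sym_trans (word X) (@fred1 X) u v.

Definition conj_prod (X : Type) (s : seq (word X * word X)) : word X :=
  flatten (map (fun xr => xr.1 ++ xr.2 ++ winv xr.1) s).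

Definition null_expr (X : Type) (T : word X -> Prop) (w : word X)
    (s : seq (word X * word X)) : Prop :=
  (forall x r, In (x, r) s -> T r \/ T (winv r)) /\ freely_equal w (conj_prod s).

Definition nullhom (X : Type) (T : word X -> Prop) (w : word X) : Prop :=
  exists s, null_expr T w s.

Definition area_radius_pair (X : Type) (T : word X -> Prop)
    (alpha rho : nat -> nat) : Prop :=
  forall (n : nat) (w : word X), size w <= n -> nullhom T w ->
  exists s, [/\ null_expr T w s, size s <= alpha n &
                forall x r, In (x, r) s -> size x <= rho n].

(* index_le om b  means  ||om|| <= b  (the index being a minimum, this is
   "some admissible value of the index is <= b"); ||r^-1|| = ||r||. *)
Definition area_pen_pair (X : Type) (T : word X -> Prop)
    (index_le : word X -> nat -> Prop) (alpha pi : nat -> nat) : Prop :=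
  forall (n : nat) (w : word X), size w <= n -> nullhom T w ->
  exists s, [/\ null_expr T w s, size s <= alpha n &
                forall x r, In (x, r) s ->
                  exists om, [/\ T om, r = om \/ r = winv om & index_le om (pi n)]].

Definition presents (X : Type) (G : group) (H : G -> Prop) (f : X -> G)
    (T : word X -> Prop) : Prop :=
  [/\ forall x, H (f x),
      forall g, H g -> exists w, eval f w = g &
      forall w, eval f w = gone G <-> nullhom T w].

Definition finitely_presented (G : group) (H : G -> Prop) : Prop :=
  exists (B : finType) (f : B -> G) (T : seq (word B)),
    presents H f (fun r => List.In r T).

(* letters of P_Gamma: Some a for a in A, None for t *)
Definition emb (A : Type) (u : word A) : word (option A) :=
  map (fun p => (Some p.1, p.2)) u.

Definition S_rel (A : Type) (wa : A -> word A) (a : A) : word (option A) :=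
  [:: (None, true); (Some a, true); (None, false)] ++ winv (emb (wa a)).

Definition P_Gamma (A : Type) (R : word A -> Prop) (wa : A -> word A)
    (om : word (option A)) : Prop :=
  (exists r, R r /\ om = emb r) \/ (exists a, om = S_rel wa a).

Definition Sbar_rel (A : Type) (Phi : int -> word A -> word A)
    (wa : A -> word A) (k : int) (a : A) : word A :=
  Phi (k + 1)%R [:: (a, true)] ++ winv (Phi k (wa a)).

Definition realized_at (A : Type) (R : word A -> Prop)
    (Phi : int -> word A -> word A) (wa : A -> word A) (k : int)
    (om : word A) : Prop :=
  (exists r, R r /\ om = Phi k r) \/ (exists a, om = Sbar_rel Phi wa k a).

Definition P_Kinf (A : Type) (R : word A -> Prop)
    (Phi : int -> word A -> word A) (wa : A -> word A) (om : word A) : Prop :=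
  exists k, realized_at R Phi wa k om.

Definition Kinf_index_le (A : Type) (R : word A -> Prop)
    (Phi : int -> word A -> word A) (wa : A -> word A) (om : word A)
    (b : nat) : Prop :=
  exists k : int, (absz k <= b)%N /\ realized_at R Phi wa k om.

(* Main.v *)
Require Import Defs.
From Stdlib Require Import Relation_Operators List.
From mathcomp Require Import all_boot all_algebra.
From mathcomp Require Import zify ring.
Set Implicit Arguments. Unset Strict Implicit. Unset Printing Implicit Defensive.
Import GRing.Theory Num.Theory.
Local Open Scope ring_scope.

Lemma winv_cons (X : Type) (x : X * bool) u :
  winv (x :: u) = winv u ++ [:: (x.1, ~~ x.2)].
Proof. by rewrite /winv /= rev_cons -cats1. Qed.

Lemma winv_cat (X : Type) (u v : word X) : winv (u ++ v) = winv v ++ winv u.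
Proof. by rewrite /winv map_cat rev_cat. Qed.

Lemma winvK (X : Type) (u : word X) : winv (winv u) = u.
Proof.
rewrite /winv map_rev revK -map_comp.
elim: u => //= [[x b] u] IH; by rewrite negbK IH.
Qed.

Lemma fe_step (X : Type) (u v : word X) : fred1 u v -> freely_equal u v.
Proof. by move=> H; apply: rst_step. Qed.

Lemma fe_trans (X : Type) (u v w : word X) :
  freely_equal u v -> freely_equal v w -> freely_equal u w.
Proof. by move=> H1 H2; apply: rst_trans H1 H2. Qed.

Lemma fe_sym (X : Type) (u v : word X) : freely_equal u v -> freely_equal v u.
Proof. by move=> H; apply: rst_sym. Qed.

Lemma fe_refl (X : Type) (u : word X) : freely_equal u u.
Proof. by apply: rst_refl. Qed.

Lemma fe_cancel (X : Type) (z p q : word X) :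
  freely_equal (p ++ z ++ winv z ++ q) (p ++ q).
Proof.
elim: z p q => [|y z IH] p q /=; first exact: fe_refl.
have -> : p ++ (y :: z) ++ winv (y :: z) ++ q =
   (rcons p y) ++ z ++ winv z ++ ((y.1, ~~ y.2) :: q).
  by rewrite winv_cons -cats1 -!catA.
apply: fe_trans.
  exact: IH.
apply: fe_step; exists p, q, y; split => //; by rewrite -cats1 -catA.
Qed.

Fixpoint sig (A : Type) (u : word (option A)) : int :=
  match u with
  | [::] => 0
  | (None, b) :: u' => (if b then 1 else -1) + sig u'
  | (Some _, _) :: u' => sig u'
  end.

Fixpoint psi (A : Type) (Phi : int -> word A -> word A) (e : int)
  (u : word (option A)) : word A :=
  match u with
  | [::] => [::]
  | (None, b) :: u' => psi Phi (e + (if b then 1 else -1)) u'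
  | (Some a, b) :: u' => Phi e [:: (a, b)] ++ psi Phi e u'
  end.

Lemma sig_cat (A : Type) (u v : word (option A)) : sig (u ++ v) = sig u + sig v.
Proof.
elim: u => [|[[a|] b] u IH] /=; first by rewrite add0r.
  by [].
by rewrite IH addrA.
Qed.

Lemma sig_winv (A : Type) (u : word (option A)) : sig (winv u) = - sig u.
Proof.
elim: u => [|[[a|] b] u IH] /=; first by rewrite oppr0.
  by rewrite winv_cons sig_cat IH /= addr0.
rewrite winv_cons sig_cat IH /=; case: b => /=; lia.
Qed.

Lemma psi_cat (A : Type) Phi (u v : word (option A)) e :
  psi Phi e (u ++ v) = psi Phi e u ++ psi Phi (e + sig u) v.
Proof.
elim: u e => [|[[a|] b] u IH] e /=; first by rewrite addr0.
  by rewrite IH catA.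
by rewrite IH addrA.
Qed.

Lemma psi_winv (A : Type) (Phi : int -> word A -> word A)
  (Phi_cat : forall k u v, Phi k (u ++ v) = Phi k u ++ Phi k v)
  (Phi_inv : forall k u, Phi k (winv u) = winv (Phi k u))
  (u : word (option A)) e :
  psi Phi (e + sig u) (winv u) = winv (psi Phi e u).
Proof.
elim: u e => [|[[a|] b] u IH] e /=; first by [].
  rewrite winv_cons psi_cat IH sig_winv /= winv_cat.
  have -> : e + sig u + - sig u = e by lia.
  by rewrite cats0 -(Phi_inv e [:: (a, b)]).
rewrite winv_cons psi_cat addrA IH /= cats0.
by [].
Qed.

Lemma psi_fred (A : Type) (Phi : int -> word A -> word A)
  (Phi_cat : forall k u v, Phi k (u ++ v) = Phi k u ++ Phi k v)
  (Phi_inv : forall k u, Phi k (winv u) = winv (Phi k u))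
  (u v : word (option A)) e :
  fred1 u v -> freely_equal (psi Phi e u) (psi Phi e v).
Proof.
move=> [p [q [[[a|] b] [-> ->]]]].
  rewrite !psi_cat /=.
  have -> : Phi (e + sig p) [:: (a, ~~ b)] = winv (Phi (e + sig p) [:: (a, b)]).
    by rewrite -Phi_inv.
  exact: fe_cancel.
rewrite !psi_cat /=.
have -> : e + sig p + (if b then 1 else -1) + (if ~~ b then 1 else -1) = e + sig p.
  case: b => /=; lia.
exact: fe_refl.
Qed.

Lemma psi_fe (A : Type) (Phi : int -> word A -> word A)
  (Phi_cat : forall k u v, Phi k (u ++ v) = Phi k u ++ Phi k v)
  (Phi_inv : forall k u, Phi k (winv u) = winv (Phi k u))
  (u v : word (option A)) e :
  freely_equal u v -> freely_equal (psi Phi e u) (psi Phi e v).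
Proof.
elim=> [x y H|x|x y _ IH|x y z _ IH1 _ IH2].
- exact: psi_fred.
- exact: fe_refl.
- exact: fe_sym.
- exact: fe_trans IH1 IH2.
Qed.

Lemma psi_emb (A : Type) (Phi : int -> word A -> word A)
  (Phi_nil : forall k, Phi k [::] = [::])
  (Phi_cat : forall k u v, Phi k (u ++ v) = Phi k u ++ Phi k v)
  (u : word A) e : psi Phi e (emb u) = Phi e u.
Proof.
elim: u => [|[a b] u IH] /=; first by rewrite Phi_nil.
by rewrite IH -Phi_cat.
Qed.

Lemma sig_emb (A : Type) (u : word A) : sig (emb u) = 0.
Proof. by elim: u => [|[a b] u IH]. Qed.

Lemma sig_size (A : Type) (u : word (option A)) : (absz (sig u) <= size u)%N.
Proof.
elim: u => [|[[a|] b] u IH] //=; first by lia.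
case: b => /=; lia.
Qed.

Lemma psi_conj (A : Type) (Phi : int -> word A -> word A)
  (Phi_cat : forall k u v, Phi k (u ++ v) = Phi k u ++ Phi k v)
  (Phi_inv : forall k u, Phi k (winv u) = winv (Phi k u))
  (s : seq (word (option A) * word (option A))) e :
  (forall x r, In (x, r) s -> sig r = 0) ->
  psi Phi e (conj_prod s) =
  conj_prod (map (fun xr => (psi Phi e xr.1, psi Phi (e + sig xr.1) xr.2)) s).
Proof.
elim: s => [|[x r] s IH] H //=.
rewrite /conj_prod /= -/(conj_prod s) -/(conj_prod _).
rewrite !psi_cat !sig_cat sig_winv (H x r (or_introl erefl)).
have -> : e + (sig x + (0 + - sig x)) = e by lia.
rewrite IH; last by move=> x' r' Hin; apply: (H x' r'); right.
have -> : e + sig x + 0 = e + sig x by lia.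
by rewrite psi_winv // catA.
Qed.

Section G.
Lemma gmulVr (G : group) (x : G) : gmul x (ginv x) = gone G.
Proof.
transitivity (gmul (gmul (ginv (ginv x)) (ginv x)) (gmul x (ginv x))).
  by rewrite gmulV gmul1.
by rewrite -gmulA (gmulA (ginv x) x) gmulV gmul1 gmulV.
Qed.

Lemma gmulr1 (G : group) (x : G) : gmul x (gone G) = x.
Proof. by rewrite -(gmulV x) gmulA gmulVr gmul1. Qed.

Lemma ginv_uniq (G : group) (x y : G) : gmul x y = gone G -> y = ginv x.
Proof.
move=> H; by rewrite -[y]gmul1 -(gmulV x) -gmulA H gmulr1.
Qed.

Lemma ginvK (G : group) (x : G) : ginv (ginv x) = x.
Proof. by rewrite -(ginv_uniq (gmulV x)). Qed.

Lemma ginvM (G : group) (x y : G) : ginv (gmul x y) = gmul (ginv y) (ginv x).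
Proof.
symmetry; apply: ginv_uniq.
by rewrite -gmulA (gmulA y) gmulVr gmul1 gmulVr.
Qed.

Lemma ginv1 (G : group) : ginv (gone G) = gone G.
Proof. by rewrite -{2}(gmulV (gone G)) gmulr1. Qed.
End G.

Lemma eval_cat (X : Type) (G : group) (f : X -> G) u v :
  eval f (u ++ v) = gmul (eval f u) (eval f v).
Proof. elim: u => [|x u IH] /=; by rewrite ?gmul1 // IH gmulA. Qed.

Lemma eval_winv (X : Type) (G : group) (f : X -> G) u :
  eval f (winv u) = ginv (eval f u).
Proof.
elim: u => [|[x b] u IH] /=; first by rewrite ginv1.
rewrite winv_cons eval_cat IH ginvM /= gmulr1.
by case: b => //=; rewrite ginvK.
Qed.

Lemma eval_fe (X : Type) (G : group) (f : X -> G) u v :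
  freely_equal u v -> eval f u = eval f v.
Proof.
elim=> [x y [p [q [[a b] [-> ->]]]]|x|x y _ IH|x y z _ IH1 _ IH2].
- rewrite !eval_cat /=; congr gmul.
  by case: b => /=; rewrite gmulA ?gmulVr ?gmulV gmul1.
- by [].
- by rewrite IH.
- by rewrite IH1 IH2.
Qed.

Lemma eval_conj (X : Type) (G : group) (f : X -> G) s :
  (forall x r, In (x, r) s -> eval f r = gone G) -> eval f (conj_prod s) = gone G.
Proof.
elim: s => [|[x r] s IH] H //=.
have IH' := IH (fun x0 r0 Hin => H x0 r0 (or_intror Hin)).
rewrite /conj_prod /= -/(conj_prod s) !eval_cat IH'.
by rewrite (H x r (or_introl erefl)) gmul1 eval_winv gmulVr ?gmul1 ?gmulr1.
Qed.

Lemma eval_nullhom (X : Type) (G : group) (f : X -> G) (T : word X -> Prop) w :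
  (forall r, T r -> eval f r = gone G) -> nullhom T w -> eval f w = gone G.
Proof.
move=> HT [s [Hs Hfe]]; rewrite (eval_fe f Hfe); apply: eval_conj => x r /Hs [/HT//|].
by move/HT; rewrite eval_winv => H; rewrite -(ginvK (eval f r)) H ginv1.
Qed.

Lemma gexpn_comm (G : group) (g : G) n : gmul (gexpn g n) g = gmul g (gexpn g n).
Proof. elim: n => [|n IH] /=; first by rewrite gmul1 gmulr1. by rewrite -gmulA IH. Qed.

Lemma gexpzN (G : group) (g : G) k : gexpz g (- k) = ginv (gexpz g k).
Proof.
case: k => [[|n]|n] /=; first by rewrite ginv1.
  by [].
by rewrite ginvK.
Qed.

Lemma gexpzS (G : group) (g : G) k : gexpz g (k + 1) = gmul (gexpz g k) g.
Proof.
case: k => [n|[|n]].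
- have -> : (Posz n + 1 = Posz n.+1)%R by lia.
  by rewrite /= gexpn_comm.
- have -> : (Negz 0 + 1 = 0)%R by [].
  by rewrite /= gmulr1 gmulV.
- have -> : (Negz n.+1 + 1 = Negz n)%R by rewrite !NegzE; lia.
  change (ginv (gexpn g n.+1) = gmul (ginv (gmul g (gexpn g n.+1))) g).
  by rewrite ginvM -gmulA gmulV gmulr1.
Qed.

Lemma emb_winv (A : Type) (u : word A) : emb (winv u) = winv (emb u).
Proof. by rewrite /emb /winv !map_rev -!map_comp. Qed.

Lemma emb_cat (A : Type) (u v : word A) : emb (u ++ v) = emb u ++ emb v.
Proof. by rewrite /emb map_cat. Qed.

Lemma emb_fe (A : Type) (u v : word A) : freely_equal u v -> freely_equal (emb u) (emb v).
Proof.
elim=> [x y [p [q [[a b] [-> ->]]]]|x|x y _ IH|x y z _ IH1 _ IH2].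
- apply: fe_step; exists (emb p), (emb q), (Some a, b).
  by rewrite !emb_cat.
- exact: fe_refl.
- exact: fe_sym.
- exact: fe_trans IH1 IH2.
Qed.

Lemma emb_conj (A : Type) (s : seq (word A * word A)) :
  emb (conj_prod s) = conj_prod (map (fun xr => (emb xr.1, emb xr.2)) s).
Proof.
elim: s => [|[x r] s IH] //=.
by rewrite /conj_prod /= -/(conj_prod s) -/(conj_prod _) !emb_cat emb_winv IH.
Qed.

Lemma In_map (T U : Type) (f : T -> U) (s : seq T) y :
  In y (map f s) -> exists x, In x s /\ y = f x.
Proof.
elim: s => [|x s IH] //= [<-|/IH [z [Hz ->]]]; first by exists x; split => //; left.
by exists z; split => //; right.
Qed.

Lemma sig_PG (A : Type) (R : word A -> Prop) wa om :
  P_Gamma R wa om -> sig om = 0.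
Proof.
case=> [[r [_ ->]]|[a ->]]; first exact: sig_emb.
rewrite /S_rel sig_cat sig_winv sig_emb /=; lia.
Qed.

Lemma psi_PG (A : Type) (R : word A -> Prop) wa (Phi : int -> word A -> word A)
  (Phi_nil : forall k, Phi k [::] = [::])
  (Phi_cat : forall k u v, Phi k (u ++ v) = Phi k u ++ Phi k v)
  (Phi_inv : forall k u, Phi k (winv u) = winv (Phi k u)) k om :
  P_Gamma R wa om -> realized_at R Phi wa k (psi Phi k om).
Proof.
case=> [[r [Hr ->]]|[a ->]].
  by left; exists r; split => //; rewrite psi_emb.
right; exists a; rewrite /S_rel /Sbar_rel /=.
have -> : k + 1 + -1 = k by lia.
have := psi_winv Phi_cat Phi_inv (emb (wa a)) k.
by rewrite sig_emb addr0 psi_emb // => ->.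
Qed.
Local Close Scope ring_scope.
Unset Implicit Arguments.
Theorem theorem3p1
  (Gam : group) (K : Gam -> Prop)
  (* Gamma / K = Z : a surjective homomorphism onto Z with kernel K *)
  (phi : Gam -> int)
  (phi_mul : forall x y, phi (gmul x y) = (phi x + phi y)%R)
  (phi_surj : forall z : int, exists g, phi g = z)
  (phi_ker : forall g, K g <-> phi g = 0%R)
  (* K and Gamma finitely presented *)
  (fpK : finitely_presented K)
  (fpGam : finitely_presented (fun _ : Gam => True))
  (* finite generating set A of K, presentation P_K = <A | R> *)
  (A : finType) (iota : A -> Gam) (R : word A -> Prop)
  (PK : presents K iota R)
  (* t maps to a generator of Gamma/K *)
  (t : Gam) (ht : phi t = 1%R \/ phi t = (-1)%R)
  (* w_a represents theta(a) = t a t^-1 *)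
  (wa : A -> word A)
  (hwa : forall a, eval iota (wa a) = gmul t (gmul (iota a) (ginv t)))
  (* Phi_k : free-monoid endomorphisms lifting theta^k, commuting with inversion *)
  (Phi : int -> word A -> word A)
  (Phi_nil : forall k, Phi k [::] = [::])
  (Phi_cat : forall k u v, Phi k (u ++ v) = Phi k u ++ Phi k v)
  (Phi_inv : forall k u, Phi k (winv u) = winv (Phi k u))
  (Phi_lift : forall k u,
     eval iota (Phi k u) = gmul (gexpz t k) (gmul (eval iota u) (gexpz t (- k)%R)))
  (Phi0 : forall u, Phi 0%R u = u)
  (alpha rho : nat -> nat) :
  area_radius_pair (P_Gamma R wa) alpha rho ->
  area_pen_pair (P_Kinf R Phi wa) (Kinf_index_le R Phi wa) alpha rho.
Proof.
move=> HAR n w Hw Hnull.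
case: PK => _ _ Hpres.
have evR : forall r, R r -> eval iota r = gone Gam.
  move=> r Hr; apply/(Hpres r); exists [:: ([::], r)]; split.
    by move=> x r' [[_ <-]|[]]; left.
  rewrite /conj_prod /winv /= !cats0; exact: fe_refl.
have HT : forall r, P_Kinf R Phi wa r -> eval iota r = gone Gam.
  move=> r [k [[r0 [Hr0 ->]]|[a ->]]].
    by rewrite Phi_lift evR // gmul1 gexpzN gmulVr.
  rewrite /Sbar_rel eval_cat eval_winv.
  suff -> : eval iota (Phi (k + 1)%R [:: (a, true)]) = eval iota (Phi k (wa a)).
    exact: gmulVr.
  rewrite !Phi_lift hwa /= gmulr1 !gexpzN gexpzS ginvM.
  by rewrite !gmulA.
have Hw1 : eval iota w = gone Gam := eval_nullhom HT Hnull.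
have [s0 [Hs0 Hfe0]] : nullhom R w by apply/Hpres.
have HnG : nullhom (P_Gamma R wa) (emb w).
  exists (map (fun xr => (emb xr.1, emb xr.2)) s0); split.
    move=> x r Hin1; have [[x0 r0] [Hin E]] := In_map Hin1; case: E => _ ->.
    case: (Hs0 _ _ Hin) => H.
      by left; left; exists r0.
    by right; left; exists (winv r0); rewrite emb_winv.
  by rewrite -emb_conj; exact: emb_fe.
have Hsz : (size (emb w) <= n)%N by rewrite size_map.
have [s [[Hs Hfe] Has Hrad]] := HAR n (emb w) Hsz HnG.
have Hsig : forall x r, In (x, r) s -> sig r = 0%R.
  move=> x r /Hs [/sig_PG //|/sig_PG]; by rewrite sig_winv => /eqP; rewrite oppr_eq0 => /eqP.
exists (map (fun xr => (psi Phi 0%R xr.1, psi Phi (0 + sig xr.1)%R xr.2)) s); split.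
- split; last first.
    rewrite -psi_conj //.
    have -> : w = psi Phi 0%R (emb w) by rewrite psi_emb // Phi0.
    exact: psi_fe.
  move=> x' r' Hin1; have [[x r] [Hin E]] := In_map Hin1; case: E => _ -> /=.
  case: (Hs _ _ Hin) => H.
    by left; exists (0 + sig x)%R; exact: psi_PG.
  right.
  have := psi_winv Phi_cat Phi_inv (winv r) (0 + sig x)%R.
  rewrite winvK sig_winv (Hsig _ _ Hin) oppr0 addr0 => ->.
  by rewrite winvK; exists (0 + sig x)%R; exact: psi_PG.
- by rewrite size_map.
- move=> x' r' Hin1; have [[x r] [Hin E]] := In_map Hin1; case: E => _ -> /=.
  have Hk : (absz (0 + sig x)%R <= rho n)%N.
    rewrite add0r; apply: leq_trans (sig_size x) (Hrad _ _ Hin).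
  case: (Hs _ _ Hin) => H.
    exists (psi Phi (0 + sig x)%R r); split; [by exists (0 + sig x)%R; exact: psi_PG
      | by left | by exists (0 + sig x)%R; split => //; exact: psi_PG].
  exists (psi Phi (0 + sig x)%R (winv r)); split;
    [by exists (0 + sig x)%R; exact: psi_PG | right
      | by exists (0 + sig x)%R; split => //; exact: psi_PG].
  have := psi_winv Phi_cat Phi_inv (winv r) (0 + sig x)%R.
  by rewrite winvK sig_winv (Hsig _ _ Hin) oppr0 addr0.
Qed.
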